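(* Let $\lambda_1$ be a Dyck path of length $2n_1$ and $\lambda_2$ a Dyck path of length $2m_1$, and let $\lambda=\lambda_1\lambda_2$ be their concatenation. Then $$P_{\lambda,\lambda_0}=\genfrac{[}{]}{0pt}{}{n_1+m_1}{n_1}P_{\lambda_1,\lambda_0}P_{\lambda_2,\lambda_0}.$$
   Context: $[n]=\sum_{i=0}^{n-1}q^i$, $[n]!=\prod_{i=1}^n[i]$, $\genfrac{[}{]}{0pt}{}{n}{k}=[n]!/([k]![n-k]!)$. For a Dyck word $\lambda$: chords are matched $U$–$D$ pairs (parenthesis matching); $A(\lambda)$ is the rooted plane tree with one edge per chord, the edge of chord $c$ hanging directly below the edge of the innermost chord strictly containing $c$, or from the root if none; siblings ordered left to right. The capacity of a leaf edge (a chord whose $U$ is immediately followed by its $D$), with respect to $\lambda_0$ the all-$U$ word of the length of $\lambda$, is the number of $D$'s of $\lambda$ strictly to the left of that $U$. A labelling of Lascoux--Sch\''utzenberger type assigns non-negative integers to edges so that each edge's label is at most those of the edges directly below it, and each leaf edge's label is at most its capacity. $P_{\lambda,\lambda_0}=\sum q^{\text{sum of labels}}$ over these labellings. *)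

(* Defs.v *)
(* Dyck words as seq bool: true = U, false = D. Positions are 0-based. *)
From HB Require Import structures.
From mathcomp Require Import all_boot all_order all_algebra.
Set Implicit Arguments. Unset Strict Implicit. Unset Printing Implicit Defensive.
Import GRing.Theory.
Local Open Scope ring_scope.

Definition qint (n : nat) : {poly rat} := \sum_(i < n) 'X^i.
Definition qfact (n : nat) : {poly rat} := \prod_(i < n) qint i.+1.
Definition qbinom (n k : nat) : {poly rat} := qfact n %/ (qfact k * qfact (n - k)).

Definition isU (w : seq bool) (i : nat) : bool := nth false w i.
Definition nU (s : seq bool) : nat := count id s.
Definition nD (s : seq bool) : nat := count negb s.

Definition dyck (w : seq bool) : bool :=
  (nU w == nD w) && [forall k : 'I_(size w).+1, nD (take k w) <= nU (take k w)]%N.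

Definition seg (w : seq bool) (i j : nat) : seq bool := take (j - i).+1 (drop i w).

(* the U at position i is matched with the D at position j (parenthesis matching) *)
Definition is_match (w : seq bool) (i j : nat) : bool :=
  [&& (i < j)%N, isU w i, ~~ isU w j, nU (seg w i j) == nD (seg w i j)
   & [forall k : 'I_j, (i < k)%N ==> (nU (seg w i k) != nD (seg w i k))]].

Definition contains (w : seq bool) (c d : nat) : bool :=
  [exists j : 'I_(size w), is_match w c j && (c < d < j)%N].

Definition parent (w : seq bool) (c d : nat) : bool :=
  [&& isU w c, isU w d, contains w c d
   & [forall c' : 'I_(size w), (isU w c' && contains w c' d) ==> (c' <= c)%N]].

Definition leaf (w : seq bool) (c : nat) : bool := isU w c && ~~ isU w c.+1.

(* capacity (w.r.t. the all-U word): number of D's strictly left of the U *)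
Definition cap (w : seq bool) (c : nat) : nat := nD (take c w).

(* Lascoux--Schuetzenberger labelling; labels are stored at the U-position of
   each chord, and non-chord (D) positions carry label 0 *)
Definition LSlabelling (w : seq bool) (f : nat -> nat) : bool :=
  [forall i : 'I_(size w),
     [&& (~~ isU w i) ==> (f i == 0%N),
         leaf w i ==> (f i <= cap w i)%N
       & [forall j : 'I_(size w), parent w i j ==> (f i <= f j)%N]]].

(* P_{w, w0}. Every LS labelling has all labels <= size w (each label is bounded
   by a leaf capacity below it, which is < size w), so labels in 'I_(size w).+1
   enumerate all labellings. *)
Definition Ppoly (w : seq bool) : {poly rat} :=
  \sum_(f : {ffun 'I_(size w) -> 'I_(size w).+1}
        | LSlabelling w (fun i => oapp (fun j : 'I_(size w) => nat_of_ord (f j)) 0%N (insub i)))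
     'X^(\sum_(i < size w) nat_of_ord (f i)).

(* Main.v *)
Require Import Defs.
From mathcomp Require Import all_boot all_order all_algebra.
From mathcomp Require Import zify ring.
From Stdlib Require Import FunctionalExtensionality.
Set Implicit Arguments. Unset Strict Implicit. Unset Printing Implicit Defensive.

Module PA.
Import GRing.Theory Num.Theory.
Local Open Scope ring_scope.

Fixpoint qb (n k : nat) : {poly rat} :=
  match n, k with
  | _, 0%N => 1
  | 0%N, _.+1 => 0
  | n'.+1, k'.+1 => qb n' k' + 'X^(k'.+1) * qb n' k'.+1
  end.

Lemma qb0 n : qb n 0 = 1. Proof. by case: n. Qed.
Lemma qbSS n k : qb n.+1 k.+1 = qb n k + 'X^(k.+1) * qb n k.+1. Proof. by []. Qed.

Lemma qb_gt n k : (n < k)%N -> qb n k = 0.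
Proof.
elim: n k => [|n IH] [|k] //= H.
by rewrite !IH ?mulr0 ?addr0 //; lia.
Qed.

Lemma qbnn n : qb n n = 1.
Proof. elim: n => [|n IH] //=. by rewrite IH qb_gt ?mulr0 ?addr0. Qed.

Lemma qintD a b : qint (a + b) = qint a + 'X^a * qint b.
Proof.
rewrite /qint big_split_ord /= mulr_sumr; congr (_ + _).
by apply: eq_bigr => i _; rewrite exprD.
Qed.

Lemma qint1 : qint 1 = 1. Proof. by rewrite /qint big_ord1 expr0. Qed.
Lemma qint0 : qint 0 = 0. Proof. by rewrite /qint big_ord0. Qed.

Lemma qfactS n : qfact n.+1 = qfact n * qint n.+1.
Proof. by rewrite /qfact big_ord_recr. Qed.
Lemma qfact0 : qfact 0 = 1. Proof. by rewrite /qfact big_ord0. Qed.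

Lemma qint_neq0 n : qint n.+1 != 0.
Proof.
apply/negP => /eqP H.
have : (qint n.+1).[1] = n.+1%:R.
  rewrite /qint horner_sum.
  under eq_bigr do rewrite hornerXn expr1n.
  by rewrite sumr_const card_ord.
by rewrite H horner0 => /esym/eqP; rewrite pnatr_eq0.
Qed.

Lemma qfact_neq0 n : qfact n != 0.
Proof. by apply/prodf_neq0 => i _; apply: qint_neq0. Qed.

Lemma qb_fact n k : (k <= n)%N -> qb n k * (qfact k * qfact (n - k)) = qfact n.
Proof.
elim: n k => [|n IH] [|k] //= Hk.
- by rewrite qfact0 !mulr1.
- by rewrite ?qb0 subn0 qfact0 !mul1r.
have E1 : qb n k * (qfact k.+1 * qfact (n - k)) = qfact n * qint k.+1.
  rewrite qfactS -(IH k Hk). clear IH Hk. ring.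
have E2 : qb n k.+1 * (qfact k.+1 * qfact (n - k)) = qfact n * qint (n - k).
  case: (ltnP k n) => Hkn.
  - have -> : (n - k = (n - k.+1).+1)%N by lia.
    by rewrite (qfactS (n - k.+1)) -(IH k.+1 Hkn); ring.
  - have -> : (n - k = 0)%N by lia.
    by rewrite qb_gt ?qint0 ?mul0r ?mulr0 //; lia.
rewrite (qfactS n).
have -> : qint n.+1 = qint k.+1 + 'X^(k.+1) * qint (n - k).
  by rewrite -qintD; congr qint; lia.
rewrite mulrDl -mulrA E2 E1; ring.
Qed.

Lemma qb_factD a b : qb (a + b) a * (qfact a * qfact b) = qfact (a + b).
Proof. by have := qb_fact (leq_addr b a); rewrite addKn. Qed.

Lemma qbinom_qb n k : (k <= n)%N -> qbinom n k = qb n k.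
Proof.
move=> H; rewrite /qbinom -(qb_fact H) mulpK //.
by rewrite mulf_neq0 // qfact_neq0.
Qed.

Lemma qf3_neq0 a b c : qfact a * qfact b * qfact c != 0.
Proof. by rewrite !mulf_neq0 // qfact_neq0. Qed.

Lemma qb_tri a b m :
  qb (a + m) a * qb (b + (a + m)) b = qb (a + b + m) (a + b) * qb (b + a) b.
Proof.
apply: (mulIf (qf3_neq0 a b m)).
have h1 := qb_factD a m. have h2 := qb_factD b (a + m).
have h3 := qb_factD (a + b) m. have h4 := qb_factD b a.
transitivity (qfact (b + (a + m))).
  rewrite -h2 -h1; ring.
have -> : (b + (a + m) = a + b + m)%N by lia.
rewrite -h3 -(addnC b a) -h4; ring.
Qed.

Lemma qb_hockey a x c : (x <= c)%N ->
  \sum_(x <= y < c.+1) 'X^(y * a.+1) * qb (a + (c - y)) a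
  = 'X^(x * a.+1) * qb (a.+1 + (c - x)) a.+1.
Proof.
move=> H; move: {2}(c - x)%N (erefl (c - x)%N) => d.
elim: d x H => [|d IH] x H Hd.
- have -> : x = c by lia.
  by rewrite big_ltn // big_geq // subnn !addn0 addr0 !qbnn.
- rewrite big_ltn; last by lia.
  rewrite IH; [|lia|lia].
  rewrite Hd.
  have -> : (c - x.+1 = d)%N by lia.
  have -> : (a.+1 + d = a + d.+1)%N by lia.
  have -> : (a.+1 + d.+1 = (a + d.+1).+1)%N by lia.
  rewrite [in RHS]qbSS mulrDr; congr (_ + _).
  by rewrite mulrA -exprD; congr (_ * _); congr ('X^_); lia.
Qed.

End PA.
Import PA.

Module PB.

Lemma is_matchP w i j : reflect
  [/\ i < j, isU w i, ~~ isU w j, nU (seg w i j) = nD (seg w i j)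
    & forall k, i < k < j -> nU (seg w i k) <> nD (seg w i k)]
  (is_match w i j).
Proof.
apply: (iffP and5P) => [[H1 H2 H3 /eqP H4 /forallP H5]|[H1 H2 H3 H4 H5]];
  split => //.
- move=> k /andP[Hik Hkj]; have := H5 (Ordinal Hkj); rewrite /= Hik /= => /eqP; done.
- by apply/eqP.
- apply/forallP => k; apply/implyP => Hik; apply/eqP; apply: H5.
  by rewrite Hik ltn_ord.
Qed.

Lemma isU_size w i : isU w i -> i < size w.
Proof. rewrite /isU; case: ltnP => // H; by rewrite nth_default. Qed.

Lemma isU_catl u v i : i < size u -> isU (u ++ v) i = isU u i.
Proof. by move=> H; rewrite /isU nth_cat H. Qed.

Lemma isU_catr u v i : isU (u ++ v) (size u + i) = isU v i.
Proof. by rewrite /isU nth_cat ltnNge leq_addr /= addKn. Qed.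

Lemma seg_catr u v i j : seg (u ++ v) (size u + i) (size u + j) = seg v i j.
Proof. by rewrite /seg subnDl (addnC (size u) i) -drop_drop drop_size_cat. Qed.

Lemma seg_catl u v i j : i <= j < size u -> seg (u ++ v) i j = seg u i j.
Proof.
move=> /andP[H1 H2]; rewrite /seg drop_cat ifT; last by lia.
by rewrite takel_cat // size_drop; lia.
Qed.

Lemma match_catr u v i j : is_match (u ++ v) (size u + i) (size u + j) = is_match v i j.
Proof.
apply/is_matchP/is_matchP => [[H1 H2 H3 H4 H5]|[H1 H2 H3 H4 H5]]; split.
- by lia.
- by rewrite -(isU_catr u).
- by rewrite -(isU_catr u).
- by rewrite -(seg_catr u).
- move=> k Hk; rewrite -(seg_catr u); apply: H5; lia.
- by lia.
- by rewrite isU_catr.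
- by rewrite isU_catr.
- by rewrite seg_catr.
- move=> k Hk; have -> : k = size u + (k - size u) by lia.
  rewrite seg_catr; apply: H5; lia.
Qed.

Lemma match_catl u v i j : j < size u -> is_match (u ++ v) i j = is_match u i j.
Proof.
move=> Hj; apply/is_matchP/is_matchP => [[H1 H2 H3 H4 H5]|[H1 H2 H3 H4 H5]]; split.
- by [].
- by rewrite -(isU_catl v) //; lia.
- by rewrite -(isU_catl v).
- by rewrite -(seg_catl v) //; lia.
- move=> k Hk; rewrite -(seg_catl v); [apply: H5|]; lia.
- by [].
- by rewrite isU_catl //; lia.
- by rewrite isU_catl.
- by rewrite seg_catl //; lia.
- move=> k Hk; rewrite seg_catl; [apply: H5|]; lia.
Qed.

Lemma match_uniq w i j j' : is_match w i j -> is_match w i j' -> j = j'.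
Proof.
move=> /is_matchP[H1 _ _ H4 H5] /is_matchP[H1' _ _ H4' H5'].
case: (ltngtP j j') => // H.
- by case: (H5' j) => //; lia.
- by case: (H5 j') => //; lia.
Qed.

Lemma match_isU w i j : is_match w i j -> isU w i.
Proof. by case/is_matchP. Qed.

Definition good (u : seq bool) :=
  forall i, isU u i -> exists2 j, j < size u & is_match u i j.

Lemma match_cat_good u v i j : good u -> i < size u ->
  is_match (u ++ v) i j = (j < size u) && is_match u i j.
Proof.
move=> Hg Hi; case: (ltnP j (size u)) => Hj; first by rewrite match_catl.
apply/negP => Hm.
have := match_isU Hm; rewrite isU_catl // => /Hg[m Hm1 Hm2].
have Hm' : is_match (u ++ v) i m by rewrite match_catl.
have := match_uniq Hm Hm'; lia.
Qed.

Definition wrp (a : seq bool) := true :: (a ++ [:: false]).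
Definition pref (a : seq bool) := forall k, nD (take k a) <= nU (take k a).
Definition bal (a : seq bool) := nU a = nD a.

Lemma nU_cons b s : nU (b :: s) = b + nU s. Proof. by []. Qed.
Lemma nD_cons b s : nD (b :: s) = ~~ b + nD s. Proof. by []. Qed.
Lemma nU_cat s t : nU (s ++ t) = nU s + nU t. Proof. by rewrite /nU count_cat. Qed.
Lemma nD_cat s t : nD (s ++ t) = nD s + nD t. Proof. by rewrite /nD count_cat. Qed.

Lemma isU_wrapS a i : isU (wrp a) i.+1 = isU a i.
Proof.
rewrite /wrp /isU /= nth_cat; case: ltnP => // H.
by rewrite (nth_default _ H); case: (i - size a) => [|[]].
Qed.

Lemma size_wrap a : size (wrp a) = (size a).+2.
Proof. by rewrite /= size_cat addn1. Qed.

Lemma match_wrap0 a j : pref a -> bal a -> is_match (wrp a) 0 j = (j == (size a).+1).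
Proof.
move=> Hp Hb.
have Hm : is_match (wrp a) 0 (size a).+1.
  apply/is_matchP; split => //.
  - by rewrite isU_wrapS /isU nth_default.
  - rewrite /seg subn0 take_oversize ?size_wrap //.
    by rewrite /wrp nU_cons nD_cons nU_cat nD_cat Hb /=; lia.
  - move=> k /andP[Hk1 Hk2]; rewrite /seg subn0 /wrp /= takel_cat; last by lia.
    have := Hp k; rewrite /nU /nD /=; lia.
apply/idP/eqP => [H|->] //; exact: match_uniq H Hm.
Qed.

Lemma match_wrapS a i j : good a -> i < size a ->
  is_match (wrp a) i.+1 j.+1 = (j < size a) && is_match a i j.
Proof.
move=> Hg Hi; rewrite /wrp -cat1s.
have := match_catr [:: true] (a ++ [:: false]) i j; rewrite /= => ->.
exact: match_cat_good.
Qed.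

Lemma match_0r w i : is_match w i 0 = false.
Proof. by apply/negP => /is_matchP[]. Qed.

Lemma good_wrap a : good a -> pref a -> bal a -> good (wrp a).
Proof.
move=> Hg Hp Hb [|i] Hi.
- by exists (size a).+1; rewrite ?size_wrap // match_wrap0.
- rewrite isU_wrapS in Hi; have Hs := isU_size Hi.
  case: (Hg i Hi) => j Hj Hm; exists j.+1; first by rewrite size_wrap; lia.
  by rewrite match_wrapS // Hj.
Qed.

Lemma good_cat u v : good u -> good v -> good (u ++ v).
Proof.
move=> Hu Hv i Hi; case: (ltnP i (size u)) => H.
- rewrite isU_catl // in Hi; case: (Hu i Hi) => j Hj Hm.
  by exists j; rewrite ?size_cat ?match_catl //; lia.
- have E : i = size u + (i - size u) by lia.
  rewrite E isU_catr in Hi; case: (Hv _ Hi) => j Hj Hm.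
  exists (size u + j); first by rewrite size_cat; lia.
  by rewrite E match_catr.
Qed.

Lemma pref_cat u v : pref u -> bal u -> pref v -> pref (u ++ v).
Proof.
move=> Hu Hb Hv k; rewrite take_cat; case: ltnP => _ //.
rewrite nU_cat nD_cat Hb; have := Hv (k - size u); lia.
Qed.

Lemma pref_wrap a : pref a -> bal a -> pref (wrp a).
Proof.
move=> Hp Hb [|k] //; rewrite /wrp [take _ _]/= nU_cons nD_cons take_cat; case: ltnP => _.
- by have := Hp k; rewrite /=; lia.
- rewrite nU_cat nD_cat Hb; case: (k - size a) => [|m]; rewrite /nU /nD /=; lia.
Qed.

Lemma bal_cat u v : bal u -> bal v -> bal (u ++ v).
Proof. by rewrite /bal nU_cat nD_cat => -> ->. Qed.

Lemma bal_wrap a : bal a -> bal (wrp a).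
Proof. rewrite /bal /wrp nU_cons nD_cons nU_cat nD_cat => ->; rewrite /nD /=; lia. Qed.

Definition lastD (u : seq bool) := isU u (size u).-1 = false.

Lemma lastD_wrap a : lastD (wrp a).
Proof.
rewrite /lastD size_wrap; have -> : ((size a).+2).-1 = (size a).+1 by [].
by rewrite isU_wrapS /isU nth_default.
Qed.

Lemma lastD_cat u v : lastD u -> lastD v -> lastD (u ++ v).
Proof.
rewrite /lastD size_cat; case: v => [|b v] Hu Hv; first by rewrite cats0 addn0.
have -> : ((size u + size (b :: v)).-1 = size u + (size (b :: v)).-1)%N by rewrite /=; lia.
by rewrite isU_catr.
Qed.

End PB.
Import PB.

Module PB2.

Definition cont w c d := exists j, is_match w c j /\ c < d < j.

Lemma cont_isU w c d : cont w c d -> isU w c.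
Proof. by case=> j [/match_isU]. Qed.

Lemma cont_lt w c d : cont w c d -> c < d.
Proof. by case=> j [_ /andP[]]. Qed.

Lemma contains_cont w c d : good w -> contains w c d <-> cont w c d.
Proof.
move=> Hg; split.
- by case/existsP => j /andP[H1 H2]; exists j.
- case=> j [Hm Hj]; case: (Hg c (match_isU Hm)) => m Hm1 Hm2.
  have E := match_uniq Hm Hm2; subst m.
  by apply/existsP; exists (Ordinal Hm1); rewrite /= Hm Hj.
Qed.

Lemma cont_catl u v c d : good u -> c < size u -> cont (u ++ v) c d <-> cont u c d.
Proof.
move=> Hg Hc; split; case=> j [Hm Hj]; exists j; split => //.
- by move: Hm; rewrite match_cat_good // => /andP[].
- by rewrite match_cat_good // Hm andbT; have := Hg c (match_isU Hm); case=> m Hm1 Hm2;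
  rewrite (match_uniq Hm Hm2).
Qed.

Lemma cont_cat_lt u v c d : good u -> c < size u -> cont (u ++ v) c d -> d < size u.
Proof.
move=> Hg Hc; case=> j [Hm Hj]; move: Hm; rewrite match_cat_good // => /andP[H _]; lia.
Qed.

Lemma cont_catr u v c d : cont (u ++ v) (size u + c) (size u + d) <-> cont v c d.
Proof.
split; case=> j [Hm Hj].
- have E : j = size u + (j - size u) by lia.
  rewrite E match_catr in Hm; exists (j - size u); split => //; lia.
- exists (size u + j); rewrite match_catr; split => //; lia.
Qed.

Lemma cont_wrap0 a d : pref a -> bal a -> cont (wrp a) 0 d <-> 0 < d <= size a.
Proof.
move=> Hp Hb; split.
- by case=> j [Hm Hj]; move: Hm; rewrite match_wrap0 // => /eqP E; lia.
- move=> Hd; exists (size a).+1; rewrite match_wrap0 //; split => //; lia.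
Qed.

Lemma cont_wrapS a i d : good a -> cont (wrp a) i.+1 d.+1 <-> i < size a /\ cont a i d.
Proof.
move=> Hg; split.
- case=> j [Hm Hj].
  have Hi : i < size a by have := match_isU Hm; rewrite isU_wrapS => /isU_size.
  case: j Hm Hj => [|j] Hm Hj; first by rewrite match_0r in Hm.
  rewrite match_wrapS // in Hm; case/andP: Hm => _ Hm.
  by split => //; exists j; split => //; lia.
- case=> Hi [j [Hm Hj]]; exists j.+1; split; last by lia.
  rewrite match_wrapS // Hm andbT.
  by case: (Hg i (match_isU Hm)) => m Hm1 Hm2; rewrite (match_uniq Hm Hm2).
Qed.

Lemma cont_r0 w c : ~ cont w c 0.
Proof. by move=> /cont_lt. Qed.

Definition par w c d :=
  [/\ isU w c, isU w d, cont w c d & forall c', cont w c' d -> c' <= c].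

Definition topP w d := isU w d /\ forall c', ~ cont w c' d.

Definition topb w d := isU w d && [forall c : 'I_(size w), ~~ contains w c d].

Lemma parent_par w c d : good w -> parent w c d <-> par w c d.
Proof.
move=> Hg; split.
- case/and4P => H1 H2 /(contains_cont _ _ Hg) H3 /forallP H4; split => //.
  move=> c' Hc'; have Hs := isU_size (cont_isU Hc').
  have := H4 (Ordinal Hs); rewrite /= (cont_isU Hc') /=.
  by move/implyP; apply; apply/(contains_cont _ _ Hg).
- case=> H1 H2 H3 H4; apply/and4P; split => //; first by apply/(contains_cont _ _ Hg).
  apply/forallP => c'; apply/implyP => /andP[_ /(contains_cont _ _ Hg)]; exact: H4.
Qed.

Lemma topb_top w d : good w -> topb w d <-> topP w d.
Proof.
move=> Hg; split.
- case/andP => H1 /forallP H2; split => // c' Hc'.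
  have Hs := isU_size (cont_isU Hc').
  by have := H2 (Ordinal Hs); rewrite /= => /negP; apply; apply/(contains_cont _ _ Hg).
- case=> H1 H2; apply/andP; split => //; apply/forallP => c'; apply/negP.
  by move/(contains_cont _ _ Hg); apply: H2.
Qed.

Definition LSP w c x (f : nat -> nat) := forall i, i < size w ->
  [/\ ~~ isU w i -> f i = 0, leaf w i -> f i <= c + cap w i,
      (forall j, par w i j -> f i <= f j) & topP w i -> x <= f i].

Definition LSg w c x (f : nat -> nat) :=
  [forall i : 'I_(size w), [&& (~~ isU w i) ==> (f i == 0),
     leaf w i ==> (f i <= c + cap w i),
     [forall j : 'I_(size w), parent w i j ==> (f i <= f j)]
   & topb w i ==> (x <= f i)]].

Lemma LSgP w c x f : good w -> reflect (LSP w c x f) (LSg w c x f).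
Proof.
move=> Hg; apply: (iffP forallP) => H.
- move=> i Hi; have /and4P[H1 H2 /forallP H3 H4] := H (Ordinal Hi); split.
  + by move=> Hu; apply/eqP; apply: (implyP H1).
  + exact/implyP.
  + move=> j Hp; have Hj : j < size w by case: Hp => _ /isU_size.
    by have := H3 (Ordinal Hj); move/implyP; apply; apply/(parent_par _ _ Hg).
  + by move=> Ht; apply: (implyP H4); apply/(topb_top _ Hg).
- move=> i; have [H1 H2 H3 H4] := H i (ltn_ord i); apply/and4P; split.
  + by apply/implyP => /H1 ->.
  + exact/implyP.
  + apply/forallP => j; apply/implyP => /(parent_par _ _ Hg); exact: H3.
  + by apply/implyP => /(topb_top _ Hg); exact: H4.
Qed.

Lemma LSg_ext w c x f g : (forall i, i < size w -> f i = g i) -> LSg w c x f = LSg w c x g.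
Proof.
move=> H; apply: eq_forallb => i; rewrite !H //; congr [&& _, _, _ & _].
by apply: eq_forallb => j; rewrite !H.
Qed.

End PB2.
Import PB2.

Module PB3.

Lemma cont_lt_size w c d : good w -> cont w c d -> d < size w.
Proof.
move=> Hg [j [Hm Hj]]; case: (Hg c (match_isU Hm)) => m Hm1 Hm2.
rewrite (match_uniq Hm Hm2) in Hj; lia.
Qed.

Lemma par_catl u v i j : good u -> i < size u -> par (u ++ v) i j <-> par u i j.
Proof.
move=> Hg Hi; split.
- case=> H1 H2 H3 H4.
  have Hj := cont_cat_lt Hg Hi H3.
  rewrite isU_catl // in H1; rewrite isU_catl // in H2.
  split => //; first by apply/(cont_catl v _ Hg Hi).
  move=> c' Hc'; apply: H4; have Hc := cont_lt Hc'.
  have Hcu : c' < size u by lia.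
  by apply/(cont_catl v _ Hg Hcu).
- case=> H1 H2 H3 H4.
  have Hj := cont_lt_size Hg H3.
  split; first by rewrite isU_catl.
  + by rewrite isU_catl.
  + by apply/(cont_catl v _ Hg Hi).
  + move=> c' Hc'; have Hc := cont_lt Hc'; apply: H4.
    have Hcu : c' < size u by lia.
    by apply/(cont_catl v _ Hg Hcu).
Qed.

Lemma cont_catlr u v c d : good u -> c < size u -> ~ cont (u ++ v) c (size u + d).
Proof. by move=> Hg Hc /(cont_cat_lt Hg Hc); lia. Qed.

Lemma par_catr u v i j : good u ->
  par (u ++ v) (size u + i) (size u + j) <-> par v i j.
Proof.
move=> Hg; split.
- case=> H1 H2 /cont_catr H3 H4; rewrite !isU_catr in H1 H2; split => //.
  move=> c' Hc'; have : size u + c' <= size u + i by apply: H4; apply/cont_catr.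
  lia.
- case=> H1 H2 H3 H4; split; rewrite ?isU_catr //; first by apply/cont_catr.
  move=> c' Hc'; case: (ltnP c' (size u)) => Hcu.
  + by case: (cont_catlr Hg Hcu Hc').
  + have E : c' = size u + (c' - size u) by lia.
    rewrite E in Hc' *; move/cont_catr: Hc' => /H4; lia.
Qed.

Lemma topP_catl u v i : good u -> i < size u -> topP (u ++ v) i <-> topP u i.
Proof.
move=> Hg Hi; split.
- case=> H1 H2; rewrite isU_catl // in H1; split => // c' Hc'; apply: (H2 c').
  have Hcu : c' < size u by have := cont_lt Hc'; lia.
  by apply/(cont_catl v _ Hg Hcu).
- case=> H1 H2; split; rewrite ?isU_catl // => c' Hc'; apply: (H2 c').
  have Hcu : c' < size u by have := cont_lt Hc'; lia.
  by apply/(cont_catl v _ Hg Hcu).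
Qed.

Lemma topP_catr u v i : good u -> topP (u ++ v) (size u + i) <-> topP v i.
Proof.
move=> Hg; split.
- case=> H1 H2; rewrite isU_catr in H1; split => // c' Hc'; apply: (H2 (size u + c')).
  by apply/cont_catr.
- case=> H1 H2; split; rewrite ?isU_catr // => c' Hc'.
  case: (ltnP c' (size u)) => Hcu; first by apply: (cont_catlr Hg Hcu Hc').
  have E : c' = size u + (c' - size u) by lia.
  by rewrite E in Hc'; move/cont_catr: Hc'; apply: H2.
Qed.

Lemma leaf_catl u v i : lastD u -> i < size u -> leaf (u ++ v) i = leaf u i.
Proof.
move=> Hl Hi; rewrite /leaf isU_catl //; case: (ltnP i.+1 (size u)) => H.
- by rewrite isU_catl.
- have E : i = (size u).-1 by lia.
  by rewrite E Hl.
Qed.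

Lemma leaf_catr u v i : leaf (u ++ v) (size u + i) = leaf v i.
Proof. by rewrite /leaf -addnS !isU_catr. Qed.

Lemma cap_catl u v i : i <= size u -> cap (u ++ v) i = cap u i.
Proof. by move=> H; rewrite /cap takel_cat. Qed.

Lemma cap_catr u v i : cap (u ++ v) (size u + i) = nD u + cap v i.
Proof.
rewrite /cap take_cat ltnNge leq_addr /= addKn nD_cat //.
Qed.

Lemma LSP_cat u v c x f : good u -> lastD u ->
  LSP (u ++ v) c x f <-> LSP u c x f /\ LSP v (c + nD u) x (fun i => f (size u + i)).
Proof.
move=> Hg Hl; split.
- move=> H; split.
  + move=> i Hi; have Hi' : i < size (u ++ v) by rewrite size_cat; lia.
    have [H1 H2 H3 H4] := H i Hi'; split.
    * by rewrite -(isU_catl v Hi).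
    * by rewrite -(leaf_catl v Hl Hi) -(cap_catl v (ltnW Hi)).
    * by move=> j /(par_catl v _ Hg Hi); apply: H3.
    * by move/(topP_catl v Hg Hi); apply: H4.
  + move=> i Hi; have Hi' : size u + i < size (u ++ v) by rewrite size_cat; lia.
    have [H1 H2 H3 H4] := H _ Hi'; split.
    * by rewrite -(isU_catr u v).
    * by rewrite -(leaf_catr u v) -addnA -cap_catr.
    * by move=> j /(par_catr v _ _ Hg); apply: H3.
    * by move/(topP_catr v _ Hg); apply: H4.
- case=> Hu Hv i Hi; case: (ltnP i (size u)) => Hiu.
  + have [H1 H2 H3 H4] := Hu i Hiu; split.
    * by rewrite isU_catl.
    * by rewrite leaf_catl // cap_catl //; apply: ltnW.
    * by move=> j /(par_catl v _ Hg Hiu); apply: H3.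
    * by move/(topP_catl v Hg Hiu); apply: H4.
  + have E : i = size u + (i - size u) by lia.
    have Hi2 : i - size u < size v by rewrite size_cat in Hi; lia.
    have [H1 H2 H3 H4] := Hv _ Hi2; rewrite E; split.
    * by rewrite isU_catr.
    * by rewrite leaf_catr cap_catr addnA.
    * move=> j Hp; have Hj : size u <= j.
        by case: Hp => _ _ /cont_lt; lia.
      have Ej : j = size u + (j - size u) by lia.
      by rewrite Ej in Hp *; move/(par_catr v _ _ Hg): Hp; apply: H3.
    * by move/(topP_catr v _ Hg); apply: H4.
Qed.

End PB3.
Import PB3.

Module PB4.

Section W.
Variable a : seq bool.
Hypothesis Hg : good a.
Hypothesis Hp : pref a.
Hypothesis Hb : bal a.

Lemma isU_wrp0 : isU (wrp a) 0. Proof. by []. Qed.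

Lemma par_wrp0 j : par (wrp a) 0 j.+1 <-> topP a j.
Proof.
split.
- case=> _ H2 H3 H4; rewrite isU_wrapS in H2; split => // c' Hc'.
  have Hc := isU_size (cont_isU Hc').
  have : c'.+1 <= 0 by apply: H4; apply/(cont_wrapS _ _ Hg).
  by [].
- case=> H1 H2; have Hj := isU_size H1; split => //; first by rewrite isU_wrapS.
  + by apply/(cont_wrap0 _ Hp Hb); lia.
  + case=> // c' /(cont_wrapS _ _ Hg) [_ H]; by case: (H2 c').
Qed.

Lemma par_wrpS i j : par (wrp a) i.+1 j.+1 <-> par a i j.
Proof.
split.
- case=> H1 H2 /(cont_wrapS _ _ Hg) [Hi H3] H4; rewrite !isU_wrapS in H1 H2.
  split => // c' Hc'; have Hc := isU_size (cont_isU Hc').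
  have : c'.+1 <= i.+1 by apply: H4; apply/(cont_wrapS _ _ Hg).
  by [].
- case=> H1 H2 H3 H4; split; rewrite ?isU_wrapS //.
  + by apply/(cont_wrapS _ _ Hg); split => //; apply: isU_size.
  + case=> // c' /(cont_wrapS _ _ Hg) [_ H]; exact: H4.
Qed.

Lemma topP_wrp0 : topP (wrp a) 0.
Proof. by split => // c' /cont_r0. Qed.

Lemma topP_wrpS i : ~ topP (wrp a) i.+1.
Proof.
case=> H1 H2; rewrite isU_wrapS in H1; have Hi := isU_size H1.
by apply: (H2 0); apply/(cont_wrap0 _ Hp Hb); lia.
Qed.

Lemma leaf_wrp0 : leaf (wrp a) 0 = (a == [::]).
Proof.
rewrite /leaf isU_wrp0 isU_wrapS; case E: a => [|b s] //.
have := Hp 1; rewrite E /nU /nD /isU /=; case: b E => _ /= H; first by case: eqP. by rewrite take0 in H.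
Qed.

Lemma leaf_wrpS i : leaf (wrp a) i.+1 = leaf a i.
Proof. by rewrite /leaf !isU_wrapS. Qed.

Lemma cap_wrp0 : cap (wrp a) 0 = 0. Proof. by []. Qed.

Lemma cap_wrpS i : i <= size a -> cap (wrp a) i.+1 = cap a i.
Proof. by move=> H; rewrite /cap /wrp [take _ _]/= nD_cons takel_cat. Qed.

Lemma LSP_wrp c x f :
  LSP (wrp a) c x f <->
  [/\ x <= f 0, (a = [::] -> f 0 <= c), f (size a).+1 = 0
    & LSP a c (f 0) (fun i => f i.+1)].
Proof.
split.
- move=> H; have [_ H02 H03 H04] := H 0 isT.
  have Hs : (size a).+1 < size (wrp a) by rewrite size_wrap.
  have [H11 _ _ _] := H _ Hs.
  split.
  + exact: H04 topP_wrp0.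
  + by move=> E; have := H02; rewrite leaf_wrp0 cap_wrp0 addn0 E; apply.
  + by apply: H11; rewrite isU_wrapS /isU nth_default.
  + move=> i Hi; have Hi' : i.+1 < size (wrp a) by rewrite size_wrap; lia.
    have [H1 H2 H3 H4] := H _ Hi'; split.
    * by rewrite -isU_wrapS.
    * by rewrite -leaf_wrpS -cap_wrpS //; apply: ltnW.
    * by move=> j /par_wrpS; apply: H3.
    * by move/par_wrp0; apply: H03.
- case=> Hx Hc Hz HL [|i] Hi.
  + split => //.
    * by rewrite leaf_wrp0 cap_wrp0 addn0 => /eqP; apply: Hc.
    * case=> [|j]; first by case=> _ _ /cont_r0.
      move/par_wrp0 => Ht; have Hj := isU_size (proj1 Ht).
      by have [_ _ _ ] := HL j Hj; apply.
  + rewrite size_wrap in Hi; case: (ltnP i (size a)) => Hia.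
    * have [H1 H2 H3 H4] := HL i Hia; split.
      -- by rewrite isU_wrapS.
      -- by rewrite leaf_wrpS cap_wrpS //; apply: ltnW.
      -- case=> [|j]; first by case=> _ _ /cont_r0.
         by move/par_wrpS; apply: H3.
      -- by move/topP_wrpS.
    * have E : i = size a by lia.
      rewrite E; split => //.
      -- by rewrite leaf_wrpS /leaf /isU nth_default.
      -- by move=> j [H1]; move: H1; rewrite isU_wrapS /isU nth_default.
      -- by move/topP_wrpS.
Qed.

End W.

End PB4.
Import PB4.

Module PC.
Import GRing.Theory Num.Theory.

Fixpoint seqs (N n : nat) : seq (seq nat) :=
  if n is n'.+1 then [seq x :: s | x <- iota 0 N, s <- seqs N n'] else [:: [::]].

Local Open Scope ring_scope.

Lemma big_seqs_cat N m n (F : seq nat -> {poly rat}) :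
  \sum_(s <- seqs N (m + n)) F s = \sum_(s1 <- seqs N m) \sum_(s2 <- seqs N n) F (s1 ++ s2).
Proof.
elim: m F => [|m IH] F; first by rewrite add0n big_seq1.
rewrite addSn /= !big_allpairs_dep; apply: eq_bigr => y _.
by rewrite IH.
Qed.

Lemma big_seqs1 N (F : seq nat -> {poly rat}) :
  \sum_(s <- seqs N 1) F s = \sum_(y <- iota 0 N) F [:: y].
Proof.
change (seqs N 1) with [seq x :: s | x <- iota 0 N, s <- [:: [::] : seq nat]].
by rewrite big_allpairs_dep; apply: eq_bigr => y _; rewrite big_seq1.
Qed.

Lemma size_seqs N n s : s \in seqs N n -> size s = n.
Proof.
elim: n s => [|n IH] s /=; first by rewrite inE => /eqP ->.
by case/allpairsP => [[y t] [_ /= Ht ->]]; rewrite /= (IH _ Ht).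
Qed.

Definition Lsum N w c x : {poly rat} :=
  \sum_(s <- seqs N (size w)) (if LSg w c x (nth 0%N s) then 'X^(sumn s) else 0).

Lemma Lsum_cat N u v c x : good u -> lastD u -> good v ->
  Lsum N (u ++ v) c x = Lsum N u c x * Lsum N v (c + nD u) x.
Proof.
move=> Hgu Hl Hgv; have Hg := good_cat Hgu Hgv.
rewrite /Lsum size_cat big_seqs_cat mulr_suml; apply: eq_big_seq => s1 Hs1.
rewrite mulr_sumr; apply: eq_big_seq => s2 Hs2.
have E1 := size_seqs Hs1; have E2 := size_seqs Hs2.
have -> : LSg (u ++ v) c x (nth 0%N (s1 ++ s2)) =
          LSg u c x (nth 0%N s1) && LSg v (c + nD u) x (nth 0%N s2).
  apply/(LSgP _ _ _ Hg)/andP => [/(LSP_cat _ _ _ _ Hgu Hl) [H1 H2]|[H1 H2]].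
  - split.
    + rewrite -(LSg_ext _ _ (f := nth 0%N (s1 ++ s2))); first exact/(LSgP _ _ _ Hgu).
      by move=> i Hi; rewrite nth_cat E1 Hi.
    + rewrite -(LSg_ext _ _ (f := fun i => nth 0%N (s1 ++ s2) (size u + i))).
        exact/(LSgP _ _ _ Hgv).
      by move=> i Hi; rewrite nth_cat E1 ltnNge leq_addr /= addKn.
  - apply/(LSP_cat _ _ _ _ Hgu Hl); split.
    + apply/(LSgP _ _ _ Hgu); rewrite (LSg_ext _ _ (g := nth 0%N s1)) //.
      by move=> i Hi; rewrite nth_cat E1 Hi.
    + apply/(LSgP _ _ _ Hgv); rewrite (LSg_ext _ _ (g := nth 0%N s2)) //.
      by move=> i Hi; rewrite nth_cat E1 ltnNge leq_addr /= addKn.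
by rewrite sumn_cat exprD; case: (LSg u _ _ _); case: (LSg v _ _ _);
  rewrite ?mulr0 ?mul0r.
Qed.

Lemma sum_z0 N (G : nat -> {poly rat}) : (0 < N)%N ->
  \sum_(z <- iota 0 N) (if z == 0%N then G z else 0) = G 0%N.
Proof.
case: N => // N _; rewrite /= big_cons eqxx big1_seq ?addr0 //.
by move=> z /andP[_]; rewrite mem_iota; case: z.
Qed.

Lemma Lsum_wrp N a c x : good a -> pref a -> bal a -> (0 < N)%N ->
  Lsum N (wrp a) c x = \sum_(y <- iota 0 N)
     (if (x <= y)%N && ((a == [::]) ==> (y <= c)%N) then 'X^y * Lsum N a c y else 0).
Proof.
move=> Hg Hp Hb HN; have Hgw := good_wrap Hg Hp Hb.
rewrite /Lsum size_wrap.
have -> : ((size a).+2 = 1 + (size a + 1))%N by lia.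
rewrite big_seqs_cat big_seqs1; apply: eq_bigr => y _.
have key : forall z s1, size s1 = size a ->
  LSg (wrp a) c x (nth 0%N ([:: y] ++ (s1 ++ [:: z]))) =
  [&& (x <= y)%N && ((a == [::]) ==> (y <= c)%N), z == 0%N & LSg a c y (nth 0%N s1)].
  move=> z s1 E1.
  have Ez : nth 0%N (s1 ++ [:: z]) (size a) = z by rewrite nth_cat E1 ltnn subnn.
  apply/(LSgP _ _ _ Hgw)/and3P => [/(LSP_wrp Hg Hp Hb) [H1 H2 H3 H4]|[/andP[H1 H2] /eqP H3 H4]].
  - split.
    + rewrite H1 /=; apply/implyP => /eqP; exact: H2.
    + by apply/eqP; rewrite -Ez; exact: H3.
    + rewrite -(LSg_ext _ _ (f := fun i => nth 0%N ([:: y] ++ (s1 ++ [:: z])) i.+1)).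
        exact/(LSgP _ _ _ Hg).
      by move=> i Hi; rewrite /= nth_cat E1 Hi.
  - apply/(LSP_wrp Hg Hp Hb); split => //.
    + by move=> E; apply: (implyP H2); apply/eqP.
    + by rewrite /= Ez.
    + apply/(LSgP _ _ _ Hg); rewrite (LSg_ext _ _ (g := nth 0%N s1)) //.
      by move=> i Hi; rewrite /= nth_cat E1 Hi.
rewrite big_seqs_cat; case: ifP => Hc.
- rewrite mulr_sumr; apply: eq_big_seq => s1 Hs1; have E1 := size_seqs Hs1.
  rewrite big_seqs1.
  under eq_bigr do rewrite key // Hc /=.
  transitivity (if LSg a c y (nth 0%N s1) then 'X^(y + sumn (s1 ++ [:: 0%N])) else 0 : {poly rat}); last first.
    by rewrite sumn_cat /= !addn0 exprD; case: (LSg a c y _); rewrite ?mulr0.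
  rewrite -(sum_z0 (fun z => if LSg a c y (nth 0%N s1) then 'X^(y + sumn (s1 ++ [:: z])) else 0) HN).
  apply: eq_bigr => z _; case: (z == 0%N) => //.
- apply: big1_seq => s1 Hs1; have E1 := size_seqs Hs1.
  rewrite big_seqs1; apply: big1_seq => z _; by rewrite key // Hc.
Qed.

End PC.
Import PC.

Module PD.
Import GRing.Theory Num.Theory.

Inductive forest := Lf | Br of forest & forest.

Fixpoint word F := if F is Br A B then wrp (word A) ++ word B else [::].
Fixpoint kf F := if F is Br A B then ((kf A).+1 + kf B)%N else 0%N.

Lemma word_props F :
  [/\ good (word F), pref (word F), bal (word F), lastD (word F) & nU (word F) = kf F].
Proof.
elim: F => [|A [HgA HpA HbA HlA HnA] B [HgB HpB HbB HlB HnB]].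
- split => //= i; by rewrite /isU nth_nil.
- change (word (Br A B)) with (wrp (word A) ++ word B).
  have Hgw := good_wrap HgA HpA HbA.
  split.
  + exact: good_cat.
  + by apply: pref_cat => //; [apply: pref_wrap | apply: bal_wrap].
  + by apply: bal_cat => //; apply: bal_wrap.
  + by apply: lastD_cat => //; apply: lastD_wrap.
  + by rewrite nU_cat /wrp nU_cons nU_cat HnA HnB /=; lia.
Qed.

Lemma nD_word F : nD (word F) = kf F.
Proof. by case: (word_props F) => _ _ <- _ ->. Qed.

Lemma size_word F : size (word F) = (2 * kf F)%N.
Proof.
have := count_predC id (word F); rewrite -/(nU _).
have -> : count (predC id) (word F) = nD (word F) by [].
by rewrite nD_word; case: (word_props F) => _ _ _ _ ->; lia.
Qed.

Fixpoint Pf F : {poly rat} :=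
  if F is Br A B then Pf A * qb ((kf A).+1 + kf B) (kf B) * Pf B else 1.

Local Open Scope ring_scope.

Lemma Lsum_nil N c x : Lsum N [::] c x = 1.
Proof.
rewrite /Lsum /= big_seq1 /=.
by have -> : LSg [::] c x (nth 0%N [::]) by apply/forallP => [[]].
Qed.

Lemma sum_window N x c (G : nat -> {poly rat}) : (c < N)%N ->
  \sum_(y <- iota 0 N) (if (x <= y <= c)%N then G y else 0) =
  if (x <= c)%N then \sum_(x <= y < c.+1) G y else 0.
Proof.
move=> HcN.
have -> : iota 0 N = index_iota 0 N by rewrite /index_iota subn0.
case: ifP => Hxc.
- rewrite (big_cat_nat _ (n := x)) //=; last by lia.
  rewrite (big_cat_nat _ (m := x) (n := c.+1)) //=; last by lia.
  have -> : \sum_(0 <= y < x) (if (x <= y <= c)%N then G y else 0) = 0.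
    by rewrite big_nat_cond big1 // => y /andP[/andP[_ H] _]; rewrite ifF //; lia.
  have -> : \sum_(c.+1 <= y < N) (if (x <= y <= c)%N then G y else 0) = 0.
    by rewrite big_nat_cond big1 // => y /andP[/andP[H _] _]; rewrite ifF //; lia.
  rewrite add0r addr0.
  by apply: eq_big_nat => y Hy; rewrite ifT.
- by rewrite big1 // => y _; rewrite ifF //; lia.
Qed.

Lemma Lsum_closed F c x N : (c + kf F < N)%N ->
  Lsum N (word F) c x =
  if (x <= c)%N then 'X^(x * kf F) * qb (kf F + (c - x)) (kf F) * Pf F
  else (kf F == 0%N)%:R.
Proof.
elim: F c x N => [|A IHA B IHB] c x N HN.
- change (word Lf) with ([::] : seq bool); rewrite Lsum_nil /=.
  by case: ifP => _; rewrite // muln0 expr0 qb0 !mul1r.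
- change (word (Br A B)) with (wrp (word A) ++ word B).
  change (kf (Br A B)) with ((kf A).+1 + kf B)%N in HN; change (kf (Br A B)) with ((kf A).+1 + kf B)%N.
  change (Pf (Br A B)) with (Pf A * qb ((kf A).+1 + kf B) (kf B) * Pf B).
  have [HgA HpA HbA HlA HnA] := word_props A.
  have [HgB HpB HbB HlB HnB] := word_props B.
  rewrite Lsum_cat; last 3 first.
  - exact: good_wrap.
  - exact: lastD_wrap.
  - exact: HgB.
  have -> : nD (wrp (word A)) = (kf A).+1.
    by rewrite /wrp nD_cons nD_cat nD_word /nD /=; lia.
  rewrite Lsum_wrp //; last by lia.
  have Ea : (word A == [::]) = (kf A == 0%N).
    by rewrite -size_eq0 size_word muln_eq0.
  have Hterm : forall y, (if (x <= y)%N && ((word A == [::]) ==> (y <= c)%N)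
                          then 'X^y * Lsum N (word A) c y else 0) =
     (if (x <= y <= c)%N then 'X^(y * (kf A).+1) * qb (kf A + (c - y)) (kf A) * Pf A else 0).
    move=> y; rewrite (IHA c y N) ?Ea; last by lia.
    case: (leqP y c) => Hyc.
    - rewrite implybT andbT; case: (x <= y)%N => //.
      by rewrite mulnS exprD !mulrA.
    - rewrite andbF; case: (kf A == 0%N) => /=; first by rewrite andbF.
      by rewrite mulr0; case: (x <= y)%N.
  rewrite (eq_bigr _ (fun y _ => Hterm y)) sum_window; last by lia.
  rewrite (IHB (c + (kf A).+1)%N x N); last by lia.
  case: (leqP x c) => Hxc.
  + rewrite -mulr_suml qb_hockey // ifT; last by lia.
    have T := qb_tri (kf A).+1 (kf B) (c - x).
    rewrite (addnC (kf B) (kf A).+1) in T.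
    have -> : (c + (kf A).+1 - x = (kf A).+1 + (c - x))%N by lia.
    rewrite mulnDr exprD.
    set q1 := qb ((kf A).+1 + (c - x)) (kf A).+1 in T *.
    set q2 := qb (kf B + ((kf A).+1 + (c - x))) (kf B) in T *.
    set q3 := qb ((kf A).+1 + kf B + (c - x)) ((kf A).+1 + kf B) in T *.
    set q4 := qb ((kf A).+1 + kf B) (kf B) in T *.
    transitivity ('X^(x * (kf A).+1) * 'X^(x * kf B) * Pf A * Pf B * (q1 * q2)).
      ring.
    rewrite T; ring.
  + by rewrite mul0r addSn.
Qed.

End PD.
Import PD.

Module PE.
Import GRing.Theory Num.Theory.

Lemma mem_seqs N n s : (s \in seqs N n) = (size s == n) && all (fun x => x < N) s.
Proof.
elim: n s => [|n IH] s /=.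
- by rewrite inE; case: s.
- apply/allpairsP/idP => [[[y t] [Hy Ht ->]]|].
  + by move: Hy Ht; rewrite /= mem_iota IH eqSS => /andP[_ ->] /andP[-> ->].
  + case: s => [|y0 t0] //= /andP[Hs /andP[Hy0 Ht0]].
    by exists (y0, t0); split => //=; [rewrite mem_iota | rewrite IH -eqSS Hs].
Qed.

Lemma uniq_seqs N n : uniq (seqs N n).
Proof.
elim: n => [|n IH] //=; apply: allpairs_uniq => //; first exact: iota_uniq.
by move=> [y1 t1] [y2 t2] _ _ /= [-> ->].
Qed.

Local Open Scope ring_scope.

Section FF.
Variable n : nat.
Definition img (f : {ffun 'I_n -> 'I_n.+1}) : seq nat := [seq nat_of_ord (f i) | i <- enum 'I_n].

Lemma size_img (f : {ffun 'I_n -> 'I_n.+1}) : size (img f) = n. Proof. by rewrite size_map size_enum_ord. Qed.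

Lemma nth_img (f : {ffun 'I_n -> 'I_n.+1}) (i : 'I_n) : nth 0%N (img f) i = f i.
Proof. by rewrite (nth_map i) ?size_enum_ord // nth_ord_enum. Qed.

Lemma img_oapp (f : {ffun 'I_n -> 'I_n.+1}) : (fun i => oapp (fun j : 'I_n => nat_of_ord (f j)) 0%N (insub i)) = nth 0%N (img f).
Proof.
apply: functional_extensionality => i; case: (ltnP i n) => Hi.
- by rewrite insubT /= -(nth_img f (Ordinal Hi)).
- by rewrite insubF ?nth_default ?size_img //; apply/negbTE; rewrite -leqNgt.
Qed.

Lemma sum_img (f : {ffun 'I_n -> 'I_n.+1}) : (\sum_(i < n) nat_of_ord (f i))%N = sumn (img f).
Proof. by rewrite sumnE big_map big_enum. Qed.

Lemma img_inj : injective img.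
Proof.
move=> f1 f2 E; apply/ffunP => i; apply: val_inj.
by rewrite /= -!nth_img E.
Qed.

Lemma perm_img : perm_eq (map img (index_enum {ffun 'I_n -> 'I_n.+1})) (seqs n.+1 n).
Proof.
apply: uniq_perm; first by rewrite map_inj_uniq ?index_enum_uniq //; exact: img_inj.
  exact: uniq_seqs.
move=> s; rewrite mem_seqs; apply/mapP/idP => [[f _ ->]|/andP[/eqP Hs /all_nthP Ha]].
- rewrite size_img eqxx /=; apply/allP => y /mapP [i _ ->]; exact: ltn_ord.
- exists [ffun i : 'I_n => inord (nth 0%N s i) : 'I_n.+1]; first exact: mem_index_enum.
  apply: (@eq_from_nth _ 0%N); first by rewrite size_img.
  move=> i Hi; rewrite Hs in Hi.
  rewrite -[i]/(nat_of_ord (Ordinal Hi)) nth_img ffunE inordK //.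
  by apply: Ha; rewrite Hs.
Qed.

Lemma sum_ffun_seqs (P : (nat -> nat) -> bool) :
  \sum_(f : {ffun 'I_n -> 'I_n.+1}
        | P (fun i => oapp (fun j : 'I_n => nat_of_ord (f j)) 0%N (insub i)))
     'X^(\sum_(i < n) nat_of_ord (f i))
  = \sum_(s <- seqs n.+1 n) (if P (nth 0%N s) then 'X^(sumn s) else 0 : {poly rat}).
Proof.
rewrite big_mkcond -(perm_big _ perm_img) big_map.
by apply: eq_bigr => f _; rewrite img_oapp sum_img.
Qed.
End FF.

Lemma Ppoly_Lsum w : Ppoly w = Lsum (size w).+1 w 0 0.
Proof.
rewrite /Ppoly sum_ffun_seqs /Lsum; apply: eq_bigr => s _.
congr (if _ then _ else _).
rewrite /LSlabelling /LSg; apply: eq_forallb => i.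
by rewrite add0n leq0n implybT andbT.
Qed.

End PE.
Import PE.

Module PF.
Import GRing.Theory Num.Theory.

Fixpoint fapp F G := if F is Br A B then Br A (fapp B G) else G.

Lemma word_fapp F G : word (fapp F G) = word F ++ word G.
Proof.
elim: F => [|A _ B IH] //=.
by rewrite IH catA.
Qed.

Lemma kf_fapp F G : kf (fapp F G) = (kf F + kf G)%N.
Proof. by elim: F => [|A _ B IH] //=; rewrite IH; lia. Qed.

Local Open Scope ring_scope.

Lemma qb_tri2 a b m :
  qb (b + m + a) (b + m) * qb (b + m) b = qb (a + b + m) (a + b) * qb (b + a) b.
Proof.
apply: (mulIf (qf3_neq0 a b m)).
have h1 := qb_factD (b + m) a. have h2 := qb_factD b m.
have h3 := qb_factD (a + b) m. have h4 := qb_factD b a.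
transitivity (qfact (b + m + a)).
  rewrite -h1 -h2; ring.
have -> : (b + m + a = a + b + m)%N by lia.
rewrite -h3 -(addnC b a) -h4; ring.
Qed.

Lemma Pf_fapp F G : Pf (fapp F G) = qb (kf F + kf G) (kf F) * Pf F * Pf G.
Proof.
elim: F => [|A _ B IH].
- by rewrite /= qb0 !mul1r.
- change (Pf (fapp (Br A B) G)) with
    (Pf A * qb ((kf A).+1 + kf (fapp B G)) (kf (fapp B G)) * Pf (fapp B G)).
  change (Pf (Br A B)) with (Pf A * qb ((kf A).+1 + kf B) (kf B) * Pf B).
  change (kf (Br A B)) with ((kf A).+1 + kf B)%N.
  rewrite IH kf_fapp.
  have T := qb_tri2 (kf A).+1 (kf B) (kf G).
  have -> : ((kf A).+1 + (kf B + kf G) = kf B + kf G + (kf A).+1)%N by lia.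
  set q1 := qb (kf B + kf G + (kf A).+1) (kf B + kf G) in T *.
  set q2 := qb (kf B + kf G) (kf B) in T *.
  set q3 := qb ((kf A).+1 + kf B + kf G) ((kf A).+1 + kf B) in T *.
  rewrite (addnC (kf B) (kf A).+1) in T.
  set q4 := qb ((kf A).+1 + kf B) (kf B) in T *.
  transitivity (Pf A * Pf B * Pf G * (q1 * q2)); first by ring.
  by rewrite T; ring.
Qed.

Lemma Pf_Lsum F N : (kf F < N)%N -> Lsum N (word F) 0 0 = Pf F.
Proof.
move=> H; rewrite Lsum_closed //= mul0n expr0 mul1r subnn addn0 qbnn mul1r //.
Qed.

Lemma split_first r : (nU r < nD r)%N ->
  exists a t, [/\ r = a ++ false :: t, bal a & pref a].
Proof.
move=> H.
have Ex : exists k, (nU (take k r) < nD (take k r))%N by exists (size r); rewrite take_size.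
case: (ex_minnP Ex) => k0 Hk0 Hmin.
case: k0 Hk0 Hmin => [|k] Hk Hmin; first by rewrite take0 in Hk.
have Hks : (k < size r)%N.
  rewrite ltnNge; apply/negP => Hle.
  have := Hmin k; rewrite take_oversize //.
  rewrite take_oversize in Hk; last by lia.
  by move=> /(_ Hk); lia.
have Hnk : ~~ (nU (take k r) < nD (take k r))%N.
  by apply/negP => /Hmin; lia.
rewrite (take_nth true Hks) -cats1 nU_cat nD_cat in Hk.
have Hb : nth true r k = false.
  move: Hk Hnk; case: (nth true r k); rewrite /nU /nD /=; lia.
exists (take k r), (drop k.+1 r); split.
- by rewrite -{1}(cat_take_drop k r) (drop_nth true Hks) Hb.
- rewrite /bal; move: Hk Hnk; rewrite Hb /nU /nD /=; lia.
- move=> j; case: (leqP k j) => Hj.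
  + rewrite take_taker //; move: Hk Hnk; rewrite Hb /nU /nD /=; lia.
  + rewrite take_takel; last exact: ltnW.
    by rewrite leqNgt; apply/negP => /Hmin; lia.
Qed.

Lemma bal_pref_forest n w : (size w < n)%N -> bal w -> pref w -> exists F, word F = w.
Proof.
elim: n w => [|n IH] w Hs Hb Hp; first by [].
case: w Hs Hb Hp => [|b r] Hs Hb Hp; first by exists Lf.
have Hb1 : b = true by move: (Hp 1); rewrite /nU /nD /=; case: (b) => //=; rewrite take0.
subst b; move: Hb; rewrite /bal nU_cons nD_cons /= => Hb.
case: (split_first (r := r)) => [|a [t [Er Ba Pa]]]; first by lia.
have Ew : true :: r = wrp a ++ t by rewrite Er /wrp /= -catA.
have Bt : bal t.
  move: Hb; rewrite Er nU_cat nD_cat nU_cons nD_cons Ba /bal /=; lia.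
have Pt : pref t.
  move=> j; have := Hp (size (wrp a) + j).
  rewrite Ew takeD take_size_cat // drop_size_cat // !nU_cat !nD_cat.
  have := bal_wrap Ba; rewrite /bal => ->; lia.
have Hsa : (size a < n)%N by move: Hs; rewrite Er /= size_cat /=; lia.
have Hst : (size t < n)%N by move: Hs; rewrite Er /= size_cat /=; lia.
case: (IH a Hsa Ba Pa) => FA EA; case: (IH t Hst Bt Pt) => FB EB.
by exists (Br FA FB); rewrite Ew -EA -EB.
Qed.

Lemma dyck_forest w : dyck w -> exists F, word F = w.
Proof.
case/andP => /eqP Hb /forallP Hp.
apply: (@bal_pref_forest (size w).+1) => // j.
case: (leqP j (size w)) => Hj.
- by have := Hp (Ordinal (n := (size w).+1) (m := j) Hj).
- rewrite take_oversize; last exact: ltnW.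
  by have := Hp (Ordinal (n := (size w).+1) (m := size w) (ltnSn _)); rewrite /= take_size.
Qed.

Theorem main_aux (n1 m1 : nat) (l1 l2 : seq bool) :
  dyck l1 -> size l1 = (2 * n1)%N ->
  dyck l2 -> size l2 = (2 * m1)%N ->
  Ppoly (l1 ++ l2) = qbinom (n1 + m1) n1 * Ppoly l1 * Ppoly l2.
Proof.
move=> D1 S1 D2 S2.
have [F1 E1] := dyck_forest D1; have [F2 E2] := dyck_forest D2.
have K1 : kf F1 = n1 by move: S1; rewrite -E1 size_word; lia.
have K2 : kf F2 = m1 by move: S2; rewrite -E2 size_word; lia.
subst l1 l2 n1 m1.
rewrite -word_fapp !Ppoly_Lsum !Pf_Lsum ?size_word ?kf_fapp; try lia.
by rewrite Pf_fapp qbinom_qb // leq_addr.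
Qed.

End PF.
Import PF.

Unset Implicit Arguments.
Local Open Scope ring_scope.

Theorem mainTheorem11 (n1 m1 : nat) (l1 l2 : seq bool) :
  dyck l1 -> size l1 = (2 * n1)%N ->
  dyck l2 -> size l2 = (2 * m1)%N ->
  Ppoly (l1 ++ l2) = qbinom (n1 + m1) n1 * Ppoly l1 * Ppoly l2.
Proof. exact: main_aux. Qed.
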